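(* Assume $\chi$ is weakly generic and let $\sigma=\sigma_{a,b}$ be a Serre weight, $r_\tau=a_\tau-b_\tau+1$. Let $s,t\in\mathbf{Z}_{\ge0}^\Sigma$ satisfy, for each $\tau$, $s_\tau+t_\tau=a_\tau-b_\tau+e$ and ($s_\tau\ge r_\tau$ or $t_\tau\ge r_\tau$), and $\chi_1|_{I_K}=\prod_\tau\omega_\tau^{s_\tau}$, $\chi_2|_{I_K}=\prod_\tau\omega_\tau^{t_\tau}$. Define $J=\{\tau\in\Sigma: t_\tau\le e-1\}$ and $x_\tau=s_\tau$ if $\tau\notin J$, $x_\tau=s_\tau-r_\tau$ if $\tau\in J$. Suppose $(J,x)$ is the maximal element of $\mathcal{S}(\chi_1,\chi_2,\sigma)$. Then $J=\{\tau\in\Sigma: t_\tau<r_\tau\}$.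
   Context: Let $p$ be a prime, $K/\mathbf{Q}_p$ finite with residue field $k$, residue degree $f$, ramification index $e$; $I_K$ inertia. Fix $\varpi\in\overline{K}$ with $\varpi^{p^f-1}$ a uniformiser; $\omega\colon G_K\to k^\times$ sends $g$ to the reduction of $g(\varpi)/\varpi$. $\Sigma=\mathrm{Hom}_{\mathbf{F}_p}(k,\overline{\mathbf{F}}_p)$, $\varphi(x)=x^p$, $\omega_\tau=\tau\circ\omega$, $\Omega_{\tau,a}=\sum_{i=0}^{f-1}p^ia_{\tau\circ\varphi^i}$ for $a\in\mathbf{Z}^\Sigma$. $\chi_1,\chi_2\colon G_K\to\overline{\mathbf{F}}_p^\times$ continuous characters, $\chi=\chi_1\chi_2^{-1}=\psi\prod_\tau\omega_\tau^{n_\tau}$, $\psi$ unramified, $n_\tau\in[1,p]$, some $n_\tau<p$. Weakly generic: $n_\tau\in[e,p-e]$ for all $\tau$. Serre weight $\sigma_{a,b}=\bigotimes_\tau(\det^{b_\tau}\otimes\mathrm{Sym}^{a_\tau-b_\tau}k^2)\otimes_{k,\tau}\overline{\mathbf{F}}_p$, $a_\tau-b_\tau\in[0,p-1]$. $\mathcal{S}(\chi_1,\chi_2,\sigma)$: pairs $(J,x)$, $J\subseteq\Sigma$, $x\in\mathbf{Z}^\Sigma$, $x_\tau\in[0,e-1]$, with $\chi_1|_{I_K}=\prod_{\tau\in J}\omega_\tau^{a_\tau+1+x_\tau}\prod_{\tau\notin J}\omega_\tau^{b_\tau+x_\tau}$ and $\chi_2|_{I_K}=\prod_{\tau\notin J}\omega_\tau^{a_\tau+e-x_\tau}\prod_{\tau\in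 J}\omega_\tau^{b_\tau+e-1-x_\tau}$. With $s(J,x)_\tau=a_\tau-b_\tau+1+x_\tau$ for $\tau\in J$ and $x_\tau$ for $\tau\notin J$, the order is $(J,x)\preceq(J',x')$ iff $\Omega_{\tau,s(J',x')-s(J,x)}\in(p^f-1)\mathbf{Z}_{\ge0}$ for all $\tau$; a non-empty $\mathcal{S}$ has a unique maximal element. *)

(* Defs.v *)
From HB Require Import structures.
From mathcomp Require Import all_boot all_order all_algebra all_field.

Set Implicit Arguments.
Unset Strict Implicit.
Unset Printing Implicit Defensive.

Import GRing.Theory.
Local Open Scope ring_scope.

(* Sigma = Hom_{F_p}(k, Fbar_p) is enumerated as tau_i := tau0 \o phi^i,
   i : 'I_f, for a fixed embedding tau0 : k -> L (L plays Fbar_p).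
   Then tau_i \o phi^j = tau_{(i+j) mod f}. *)
Definition sigma_shift (f : nat) (i : 'I_f) (j : nat) : 'I_f :=
  Ordinal (ltn_pmod (i + j) (leq_ltn_trans (leq0n i) (ltn_ord i))).

Definition Omega (p f : nat) (i : 'I_f) (d : 'I_f -> int) : int :=
  \sum_(j < f) (p ^ j)%:Z * d (sigma_shift i j).

Section Chars.
Variables (p f e : nat) (k : finFieldType) (L : fieldType)
  (tau0 : {rmorphism k -> L}) (I : Type) (omega : I -> k)
  (chi1 chi2 : I -> L) (a b : 'I_f -> int).

(* omega_{tau_i}(g) = tau_i (omega g) = tau0 ((omega g)^(p^i)) , g in I_K *)
Definition omega_tau (i : 'I_f) (g : I) : L := tau0 (omega g ^+ (p ^ i)).

Definition charI (m : 'I_f -> int) (g : I) : L :=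
  \prod_(i < f) omega_tau i g ^ m i.

(* weak genericity of chi = chi1 chi2^{-1} (only its restriction to
   inertia matters: psi is unramified) *)
Definition weakly_generic : Prop :=
  exists n : 'I_f -> nat,
    [/\ forall i, (1 <= n i <= p)%N,
        exists i, (n i < p)%N,
        forall g, chi1 g / chi2 g = charI (fun i => (n i)%:Z) g
      & forall i, (e <= n i <= p - e)%N].

Definition inS (J : {set 'I_f}) (x : 'I_f -> int) : Prop :=
  [/\ forall i, 0 <= x i <= (e - 1)%N%:Z,
      forall g, chi1 g = charI (fun i => if i \in J then a i + 1 + x i
                                          else b i + x i) g
    & forall g, chi2 g = charI (fun i => if i \in J then b i + e%:Z - 1 - x i
                                          else a i + e%:Z - x i) g].

Definition sJx (J : {set 'I_f}) (x : 'I_f -> int) (i : 'I_f) : int :=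
  if i \in J then a i - b i + 1 + x i else x i.

Definition preceq (J : {set 'I_f}) (x : 'I_f -> int)
                  (J' : {set 'I_f}) (x' : 'I_f -> int) : Prop :=
  forall i, exists m : nat,
    Omega p i (fun j => sJx J' x' j - sJx J x j) = ((p ^ f - 1) * m)%N%:Z.

Definition is_maxS (J : {set 'I_f}) (x : 'I_f -> int) : Prop :=
  inS J x /\
  forall J' x', inS J' x' -> preceq J x J' x' -> J' = J /\ x' =1 x.

End Chars.

(* Main.v *)
Require Import Defs.
From HB Require Import structures.
From mathcomp Require Import all_boot all_order all_algebra all_field.
From mathcomp Require Import zify.
Import GRing.Theory.
Local Open Scope ring_scope.

Theorem lemma5p9 (p f e : nat) (k : finFieldType) (L : closedFieldType)
  (tau0 : {rmorphism k -> L}) (I : Type) (omega : I -> k)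
  (chi1 chi2 : I -> L) (a b : 'I_f -> int) (s t : 'I_f -> nat) :
  prime p -> (0 < f)%N -> (0 < e)%N -> #|k| = (p ^ f)%N -> p \in [pchar L] ->
  (forall g, omega g != 0) ->
  (forall y : k, y != 0 -> exists g, omega g = y) ->
  weakly_generic p f e tau0 omega chi1 chi2 ->
  (forall i, 0 <= a i - b i <= (p - 1)%N%:Z) ->
  (forall i, (s i + t i)%N%:Z = a i - b i + e%:Z) ->
  (forall i, a i - b i + 1 <= (s i)%:Z \/ a i - b i + 1 <= (t i)%:Z) ->
  (forall g, chi1 g = charI p tau0 omega (fun i => (s i)%:Z) g) ->
  (forall g, chi2 g = charI p tau0 omega (fun i => (t i)%:Z) g) ->
  let J := [set i | (t i <= e - 1)%N] in
  let x := fun i => if i \in J then (s i)%:Z - (a i - b i + 1) else (s i)%:Z in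
  is_maxS p e tau0 omega chi1 chi2 a b J x ->
  J = [set i | (t i)%:Z < a i - b i + 1].
Proof.
move=> pr fpos epos card pch omnz omsurj wg hab hst hor hc1 hc2 J x [[hx h1 h2] hmax].
apply/setP => i; rewrite !inE.
case: (boolP ((t i)%:Z < a i - b i + 1)) => hlt.
  have := hst i; have := hab i; case: (hor i) => hh; lia.
apply/negbTE/negP => ht.
have iJ : i \in J by rewrite inE.
have hsi : ((s i)%:Z <= (e - 1)%N%:Z).
  have := hst i; have := hab i; lia.
pose J' := J :\ i.
pose x' := fun j => if j == i then (s i)%:Z else x j.
have hJ : J' = J.
  apply: (proj1 (hmax J' x' _ _)).
- split.
  + move=> j; rewrite /x'; case: eqP => [_|_]; last exact: hx.
    apply/andP; split => //; lia.
  + move=> g; rewrite h1 /charI; apply: eq_bigr => j _; congr (_ ^ _).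
    rewrite /x' /J' in_setD1; case: eqP => [->|_] /=; last by [].
    rewrite /x iJ; lia.
  + move=> g; rewrite h2 /charI; apply: eq_bigr => j _; congr (_ ^ _).
    rewrite /x' /J' in_setD1; case: eqP => [->|_] /=; last by [].
    rewrite /x iJ; lia.
- move=> j; exists 0%N; rewrite muln0 /Omega big1 // => l _.
  move: (sigma_shift j l) => m.
  rewrite /sJx /x' /J' in_setD1; case: eqP => [->|_] /=; last by rewrite subrr mulr0.
  rewrite iJ /x iJ.
  have -> : (s i)%:Z - (a i - b i + 1 + ((s i)%:Z - (a i - b i + 1))) = 0 by rewrite subrKC subrr.
  by rewrite mulr0.
have : i \in J' by rewrite hJ.
by rewrite /J' in_setD1 eqxx.
Qed.
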